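(* Let $T=K[X,Y]$ be $\mathbb Z/n\mathbb Z$-graded by $\deg X=\overline1$, $\deg Y=\overline{-1}$, let $S=T/(X^{n-2}-Y^2)=\bigoplus_{\bar i\in\mathbb Z/n\mathbb Z}S_{\bar i}$ with the induced grading, and regard $S$ as an $R$-algebra via $x\mapsto \overline{XY}$. Let $S^{[n]}\subset M_n(S)$ be the $R$-subalgebra whose $(i,j)$ entry ranges over $S_{\overline{j-i}}$. Then there is an isomorphism of $R$-algebras $S^{[n]}\cong\Lambda$.
   Context: $K$ a field, $R=K[x]$, $n\ge3$. $\Lambda\subset M_n(K(x))$ is the $R$-order whose $(i,j)$ entry ranges over $x^{c_{ij}}R$, with $c_{ij}=0$ for $i\le j$ except $c_{1n}=-1$, $c_{ij}=1$ for $i=j+1$, $c_{ij}=2$ for $i\ge j+2$. *)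

(* Defs.v *)
From HB Require Import structures.
From mathcomp Require Import all_boot all_order all_algebra.
Set Implicit Arguments. Unset Strict Implicit. Unset Printing Implicit Defensive.
Import Order.TTheory GRing.Theory Num.Theory.
Local Open Scope ring_scope.

Notation "x %:F" := (@FracField.tofrac _ x) : ring_scope.

(* T = K[X,Y] is modelled as {poly {poly K}}: the inner variable is X
   ('X%:P : {poly {poly K}}), the outer variable is Y ('X : {poly {poly K}}). *)

(* Generator of the ideal (X^(n-2) - Y^2) = (Y^2 - X^(n-2)); monic in Y. *)
Definition Srel (K : fieldType) (n : nat) : {poly {poly K}} :=
  'X^2 - ('X^(n - 2))%:P.

(* S = T / (X^(n-2) - Y^2), via the library quotient R[Y]/<h> for monic h. *)
Definition S (K : fieldType) (n : nat) := {poly %/ Srel K n}.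

Definition toS (K : fieldType) (n : nat) (t : {poly {poly K}}) : S K n :=
  in_qpoly (Srel K n) t.

(* t is homogeneous of degree d mod n for the Z/nZ-grading deg X = 1, deg Y = -1:
   every monomial X^a Y^b occurring in t satisfies a - b = d (mod n). *)
Definition T_homog (K : fieldType) (n : nat) (d : int) (t : {poly {poly K}}) : Prop :=
  forall a b : nat, (t`_b)`_a != 0 -> ((a%:Z - b%:Z - d) %% n%:Z)%Z = 0.

Definition S_homog (K : fieldType) (n : nat) (d : int) (s : S K n) : Prop :=
  exists2 t, T_homog n d t & toS n t = s.

Definition xS (K : fieldType) (n : nat) (p : {poly K}) : S K n :=
  toS n ((map_poly (fun c : K => c%:P%:P) p).[('X%:P) * 'X]).

Definition Sbr (K : fieldType) (n : nat) (A : 'M[S K n]_n) : Prop :=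
  forall i j : 'I_n, S_homog (j%:Z - i%:Z) (A i j).

(* exponents c_{ij}, with 0-based indices (paper's (1,n) is (0, n-1)) *)
Definition cexp (n : nat) (i j : 'I_n) : int :=
  if (i <= j)%N then (if (i == 0%N :> nat) && (j == n.-1 :> nat) then -1 else 0)
  else if (i == j.+1 :> nat) then 1 else 2.

Definition Lam (K : fieldType) (n : nat) (B : 'M[{fraction {poly K}}]_n) : Prop :=
  forall i j : 'I_n, exists q : {poly K},
    B i j = (('X : {poly K})%:F) ^ (cexp i j) * q%:F.

(* Main.v *)
Require Import Defs.
From HB Require Import structures.
From mathcomp Require Import all_boot all_order all_algebra.
From mathcomp Require Import zify ring lra.
Set Implicit Arguments. Unset Strict Implicit. Unset Printing Implicit Defensive.
Import Order.TTheory GRing.Theory Num.Theory.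
Local Open Scope ring_scope.


Section Basic.
Variable K : fieldType.
Variable n : nat.
Hypothesis hn : (3 <= n)%N.

Local Notation T := {poly {poly K}}.
Local Notation SS := (S K n).

Lemma Srel_monic : Srel K n \is monic.
Proof. by rewrite /Srel monicXnsubC. Qed.

Lemma size_Srel : size (Srel K n) = 3%N.
Proof. by rewrite /Srel size_XnsubC. Qed.

Lemma mk_monic_Srel : mk_monic (Srel K n) = Srel K n.
Proof. by rewrite /mk_monic size_Srel Srel_monic. Qed.

Lemma toSD (p q : T) : toS n (p + q) = toS n p + toS n q.
Proof. exact: in_qpolyD. Qed.
Lemma toSM (p q : T) : toS n (p * q) = toS n p * toS n q.
Proof. exact: in_qpolyM. Qed.
Lemma toSB (p q : T) : toS n (p - q) = toS n p - toS n q.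
Proof. exact: (raddfB (in_qpoly (Srel K n))). Qed.
Lemma toS1 : toS n (1 : T) = 1.
Proof. exact: in_qpoly1. Qed.
Lemma toS0 : toS n (0 : T) = 0.
Proof. exact: in_qpoly0. Qed.
Lemma toSX (p : T) k : toS n (p ^+ k) = toS n p ^+ k.
Proof. by elim: k => [|k IH]; rewrite ?expr0 ?toS1 // !exprS toSM IH. Qed.
Lemma toS_sum (I : Type) (r : seq I) (P : pred I) (F : I -> T) :
  toS n (\sum_(i <- r | P i) F i) = \sum_(i <- r | P i) toS n (F i).
Proof. exact: (big_morph _ toSD toS0). Qed.

Lemma toS_val (s : SS) : toS n (s : T) = s.
Proof.
apply: val_inj => /=; rewrite /toS; apply: Pdiv.CommonRing.rmodp_small.
exact: size_mk_monic.
Qed.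

Definition Xb : SS := toS n ('X%:P).
Definition Yb : SS := toS n 'X.

Lemma toS_Srel : toS n (Srel K n) = 0.
Proof.
apply: val_inj => /=; rewrite /toS /in_qpoly /= mk_monic_Srel.
by rewrite Pdiv.RingMonic.rmodpp // Srel_monic.
Qed.

Lemma Yb2 : Yb ^+ 2 = Xb ^+ (n - 2).
Proof.
apply/eqP; rewrite -subr_eq0 /Yb /Xb -!toSX -toSB.
rewrite -rmorphXn /=.
have -> : ('X ^+ 2 - ('X ^+ (n - 2))%:P : T) = Srel K n by [].
by rewrite toS_Srel.
Qed.

End Basic.


Section Psi.
Variable K : fieldType.
Variable n : nat.
Hypothesis hn : (3 <= n)%N.

Local Notation T := {poly {poly K}}.
Local Notation SS := (S K n).

Definition mapCC (r : {poly K}) : {poly T} := map_poly (polyC \o polyC) r.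

Lemma xS_E (r : {poly K}) : xS n r = toS n ((mapCC r).[('X%:P) * 'X]).
Proof. by []. Qed.

Lemma xSM (p q : {poly K}) : xS n (p * q) = xS n p * xS n q.
Proof. by rewrite !xS_E /mapCC rmorphM hornerM toSM. Qed.
Lemma xSD (p q : {poly K}) : xS n (p + q) = xS n p + xS n q.
Proof. by rewrite !xS_E /mapCC rmorphD hornerD toSD. Qed.
Lemma xS1 : xS n (1 : {poly K}) = 1.
Proof. by rewrite !xS_E /mapCC rmorph1 hornerC toS1. Qed.
Lemma xS0 : xS n (0 : {poly K}) = 0.
Proof. by rewrite !xS_E /mapCC rmorph0 hornerC toS0. Qed.
Lemma xSX : xS n ('X : {poly K}) = Xb K n * Yb K n.
Proof. by rewrite !xS_E /mapCC map_polyX hornerX toSM. Qed.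
Lemma xSC (c : K) : xS n c%:P = toS n (c%:P%:P).
Proof. by rewrite !xS_E /mapCC map_polyC hornerC. Qed.
Lemma xSXn k : xS n ('X^k : {poly K}) = (Xb K n * Yb K n) ^+ k.
Proof. by elim: k => [|k IH]; rewrite ?expr0 ?xS1 // !exprS xSM IH xSX. Qed.

Definition psi0 (p : T) : {poly K} := (map_poly (comp_poly 'X^2) p).[ 'X^(n-2) ].

Lemma psi0M (p q : T) : psi0 (p * q) = psi0 p * psi0 q.
Proof. by rewrite /psi0 rmorphM hornerM. Qed.
Lemma psi0D (p q : T) : psi0 (p + q) = psi0 p + psi0 q.
Proof. by rewrite /psi0 rmorphD hornerD. Qed.
Lemma psi0C (c : {poly K}) : psi0 c%:P = c \Po 'X^2.
Proof. by rewrite /psi0 map_polyC hornerC. Qed.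
Lemma psi0X : psi0 'X = 'X^(n-2).
Proof. by rewrite /psi0 map_polyX hornerX. Qed.
Lemma psi0N (p : T) : psi0 (- p) = - psi0 p.
Proof. by rewrite /psi0 rmorphN hornerN. Qed.
Lemma psi0B (p q : T) : psi0 (p - q) = psi0 p - psi0 q.
Proof. by rewrite psi0D psi0N. Qed.
Lemma psi01 : psi0 1 = 1.
Proof. by rewrite /psi0 rmorph1 hornerC. Qed.
Lemma psi00 : psi0 0 = 0.
Proof. by rewrite /psi0 rmorph0 hornerC. Qed.
Lemma psi0Xn (p : T) k : psi0 (p ^+ k) = psi0 p ^+ k.
Proof. by elim: k => [|k IH]; rewrite ?expr0 ?psi01 // !exprS psi0M IH. Qed.
Lemma psi0_sum (I : Type) (r : seq I) (P : pred I) (F : I -> T) :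
  psi0 (\sum_(i <- r | P i) F i) = \sum_(i <- r | P i) psi0 (F i).
Proof. exact: (big_morph _ psi0D psi00). Qed.

Lemma psi0Srel : psi0 (Srel K n) = 0.
Proof.
rewrite /Srel psi0B psi0Xn psi0X psi0C comp_Xn_poly -!exprM.
by rewrite mulnC subrr.
Qed.

Definition psi (s : SS) : {poly K} := psi0 (s : T).

Lemma psi_toS (p : T) : psi (toS n p) = psi0 p.
Proof.
rewrite /psi /toS /in_qpoly /= mk_monic_Srel.
rewrite {2}(Pdiv.RingMonic.rdivp_eq (Srel_monic K n) p).
by rewrite psi0D psi0M psi0Srel mulr0 add0r.
Qed.

Lemma psiM (s t : SS) : psi (s * t) = psi s * psi t.
Proof. by rewrite -[s]toS_val -[t]toS_val -toSM !psi_toS psi0M. Qed.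
Lemma psiD (s t : SS) : psi (s + t) = psi s + psi t.
Proof. by rewrite -[s]toS_val -[t]toS_val -toSD !psi_toS psi0D. Qed.
Lemma psi1 : psi 1 = 1.
Proof. by rewrite -toS1 psi_toS psi01. Qed.
Lemma psi_0 : psi 0 = 0.
Proof. by rewrite -(toS0 K n) psi_toS psi00. Qed.
Lemma psiXn (s : SS) k : psi (s ^+ k) = psi s ^+ k.
Proof. by elim: k => [|k IH]; rewrite ?expr0 ?psi1 // !exprS psiM IH. Qed.
Lemma psi_sum (I : Type) (r : seq I) (P : pred I) (F : I -> SS) :
  psi (\sum_(i <- r | P i) F i) = \sum_(i <- r | P i) psi (F i).
Proof. exact: (big_morph _ psiD psi_0). Qed.

Lemma psiXb : psi (Xb K n) = 'X^2.
Proof. by rewrite psi_toS psi0C comp_polyX. Qed.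
Lemma psiYb : psi (Yb K n) = 'X^(n-2).
Proof. by rewrite psi_toS psi0X. Qed.

Lemma psi_xS (r : {poly K}) : psi (xS n r) = r \Po 'X^n.
Proof.
elim/poly_ind: r => [|p c IH]; first by rewrite xS0 psi_0 comp_poly0.
rewrite xSD xSM psiD psiM IH xSX psiM psiXb psiYb xSC psi_toS psi0C comp_polyC.
by rewrite -exprD subnKC ?(leq_trans _ hn) // comp_poly_MXaddC.
Qed.

End Psi.


Section Idx.
Variable n : nat.
Hypothesis hn : (3 <= n)%N.

Definition Dd (i j : nat) : nat := if (i <= j)%N then (j - i)%N else (j + n - i)%N.
Definition ww (i j : nat) : nat := if Dd i j == n.-1 then (n - 2)%N else (2 * Dd i j)%N.

Lemma A1 (i j : 'I_n) : n%:Z * cexp i j = (ww i j)%:Z + 2 * i%:Z - 2 * j%:Z.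
Proof.
have hi := ltn_ord i; have hj := ltn_ord j.
rewrite /cexp /ww /Dd.
repeat case: ifP => ? ; lia.
Qed.

Lemma A2 (i j k : 'I_n) : cexp i k <= cexp i j + cexp j k.
Proof.
have hi := ltn_ord i; have hj := ltn_ord j; have hk := ltn_ord k.
rewrite /cexp.
repeat case: ifP => ? ; lia.
Qed.

Definition kap (i j k : 'I_n) : nat := absz (cexp i j + cexp j k - cexp i k)%R.

Lemma A3 (i j k : 'I_n) :
  (ww i j + ww j k = ww i k + kap i j k * n)%N /\ cexp i j + cexp j k = cexp i k + (kap i j k)%:Z.
Proof.
have h1 := A1 i j; have h2 := A1 j k; have h3 := A1 i k; have h4 := A2 i j k.
rewrite /kap.
have e : ((absz (cexp i j + cexp j k - cexp i k)%R)%:Z = cexp i j + cexp j k - cexp i k).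
  by rewrite gez0_abs // subr_ge0.
split; last by rewrite e; ring.
lia.
Qed.

End Idx.


Section Mono.
Variable K : fieldType.
Variable n : nat.
Hypothesis hn : (3 <= n)%N.

Local Notation T := {poly {poly K}}.
Local Notation SS := (S K n).
Local Notation Xb := (Xb K n).
Local Notation Yb := (Yb K n).

Definition uD (D : nat) : SS := if D == n.-1 then Yb else Xb ^+ D.

Lemma Xbn : Xb ^+ n = (Xb * Yb) ^+ 2.
Proof.
have h : (2 <= n)%N by lia.
by rewrite -[in X in Xb ^+ X](subnKC h) exprD -Yb2 exprMn.
Qed.

Lemma Xbn1 : Xb ^+ n.-1 = (Xb * Yb) * Yb.
Proof.
have -> : n.-1 = (1 + (n - 2))%N by lia.
by rewrite exprD -Yb2 expr1 mulrA.
Qed.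

Lemma mono (a e D : nat) : (e <= 1)%N -> (D < n)%N -> (a %% n = (D + e) %% n)%N ->
  exists k, Xb ^+ a * Yb ^+ e = (Xb * Yb) ^+ k * uD D.
Proof.
move=> he hD ha; rewrite /uD.
have [eD|nD] := eqVneq D n.-1.
- rewrite eD in ha.
  case: e he ha => [|[|//]] _ ha.
  + have hm : (n.-1 < n)%N by lia.
    rewrite addn0 (modn_small hm) in ha.
    rewrite (divn_eq a n) ha expr0 mulr1 exprD mulnC exprM Xbn Xbn1 -exprM mulrA -exprSr.
    by exists (2 * (a %/ n)).+1.
  + have h0 : (n.-1 + 1 = n)%N by lia.
    rewrite h0 modnn in ha.
    rewrite (divn_eq a n) ha addn0 expr1 mulnC exprM Xbn -exprM.
    by exists (2 * (a %/ n))%N.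
-
  case: e he ha => [|[|//]] _ ha.
  + rewrite addn0 (modn_small hD) in ha.
    rewrite (divn_eq a n) ha expr0 mulr1 exprD mulnC exprM Xbn -exprM.
    by exists (2 * (a %/ n))%N.
  + have hm : (D + 1 < n)%N by lia.
    rewrite (modn_small hm) in ha.
    rewrite (divn_eq a n) ha expr1 exprD exprD mulnC exprM Xbn -exprM expr1.
    exists (2 * (a %/ n)).+1; rewrite exprSr; ring.
Qed.

End Mono.

Section Struct.
Variable K : fieldType.
Variable n : nat.
Hypothesis hn : (3 <= n)%N.

Local Notation T := {poly {poly K}}.
Local Notation SS := (S K n).
Local Notation Xb := (Xb K n).
Local Notation Yb := (Yb K n).

Lemma toS_expand (p : T) : toS n p =
  \sum_(b < size p) \sum_(a < size p`_b) xS n (p`_b`_a)%:P * Xb ^+ a * Yb ^+ b.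
Proof.
rewrite -{1}[p]coefK poly_def toS_sum; apply: eq_bigr => b _.
rewrite -mul_polyC toSM toSX -big_distrl /=; congr (_ * _).
rewrite -{1}[p`_b]coefK poly_def rmorph_sum /= toS_sum.
apply: eq_bigr => a _.
by rewrite -mul_polyC rmorphM /= rmorphXn /= toSM toSX xSC.
Qed.

Lemma cong_step (i j : 'I_n) (a b : nat) :
  ((a%:Z - b%:Z - (j%:Z - i%:Z)) %% n%:Z)%Z = 0 ->
  ((a + (n - 2) * b./2) %% n = (Dd n i j + odd b) %% n)%N.
Proof.
move=> /dvdz_mod0P h.
have hb := odd_double_half b.
have hq : ((n - 2) * b./2 + 2 * b./2 = n * b./2)%N.
  by rewrite -mulnDl subnK // (leq_trans _ hn).
have H : (n%:Z %| (a + (n - 2) * b./2)%N%:Z - (Dd n i j + odd b)%N%:Z)%Z.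
  have -> : (a + (n - 2) * b./2)%N%:Z - (Dd n i j + odd b)%N%:Z =
     (a%:Z - b%:Z - (j%:Z - i%:Z)) + n%:Z * ((b./2)%:Z - (j < i)%N%:Z).
    have hi := ltn_ord i; have hj := ltn_ord j.
    rewrite /Dd; case: ifP => ?; lia.
  by rewrite rpredD // dvdz_mulr.
by move: H; rewrite -eqz_mod_dvd !modz_nat eqz_nat => /eqP.
Qed.

Lemma Dd_lt (i j : 'I_n) : (Dd n i j < n)%N.
Proof. have hi := ltn_ord i; have hj := ltn_ord j; rewrite /Dd; case: ifP => ?; lia. Qed.

Lemma XbYb_red (a b : nat) :
  Xb ^+ a * Yb ^+ b = Xb ^+ (a + (n - 2) * b./2) * Yb ^+ (odd b).
Proof.
rewrite -{1}(odd_double_half b) -muln2 exprD (mulnC _ 2) exprM Yb2 -exprM exprD.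
ring.
Qed.

Lemma homog_struct (i j : 'I_n) (s : SS) : S_homog (j%:Z - i%:Z) s ->
  exists r, s = xS n r * uD K n (Dd n i j).
Proof.
case=> p hp <-; rewrite toS_expand.
pose P (s : SS) := exists r, s = xS n r * uD K n (Dd n i j).
have P0 : P 0 by exists 0; rewrite xS0 mul0r.
have PD : forall x y, P x -> P y -> P (x + y).
  by move=> x y [r1 ->] [r2 ->]; exists (r1 + r2); rewrite xSD mulrDl.
apply: (big_ind P) => // b _; apply: (big_ind P) => // a _.
have [c0|cn0] := eqVneq (p`_b`_a) 0.
  by exists 0; rewrite c0 xS0 !mul0r.
have hc := cong_step (hp a b cn0).
have [k hk] := @mono K n hn _ _ _ (leq_b1 (odd b)) (Dd_lt i j) hc.
exists ((p`_b`_a)%:P * 'X^k).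
by rewrite -mulrA XbYb_red hk xSM xSXn mulrA.
Qed.

End Struct.


Lemma sum_neq0 (V : zmodType) (N : nat) (F : 'I_N -> V) :
  \sum_(i < N) F i != 0 -> exists i, F i != 0.
Proof.
move=> h; have [i Hi|H] := pickP [pred i | F i != 0]; first by exists i.
by move: h; rewrite big1 ?eqxx // => i _; move: (H i) => /= /negbFE /eqP.
Qed.

Section TH.
Variable K : fieldType.
Variable n : nat.
Hypothesis hn : (3 <= n)%N.

Local Notation T := {poly {poly K}}.

Lemma TH_mul (d e : int) (p q : T) : T_homog n d p -> T_homog n e q ->
  T_homog n (d + e) (p * q).
Proof.
move=> hp hq a b; rewrite coefM coef_sum => /sum_neq0 [l].
rewrite coefM => /sum_neq0 [m]; rewrite mulf_eq0 negb_or => /andP [h1 h2].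
have /dvdz_mod0P H1 := hp _ _ h1; have /dvdz_mod0P H2 := hq _ _ h2.
apply/dvdz_mod0P.
have hl := ltn_ord l; have hm := ltn_ord m.
have -> : a%:Z - b%:Z - (d + e) = (m%:Z - l%:Z - d) + ((a - m)%N%:Z - (b - l)%N%:Z - e) by lia.
exact: rpredD.
Qed.

Lemma TH_add (d : int) (p q : T) : T_homog n d p -> T_homog n d q -> T_homog n d (p + q).
Proof.
move=> hp hq a b; rewrite !coefD => h.
have [h1|h1] := eqVneq (p`_b`_a) 0.
  by apply: hq; move: h; rewrite h1 add0r.
exact: hp.
Qed.

Lemma TH_0 (d : int) : T_homog n d (0 : T).
Proof. by move=> a b; rewrite !coef0 eqxx. Qed.

Lemma TH_sum (d : int) (I : Type) (r : seq I) (F : I -> T) :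
  (forall i, T_homog n d (F i)) -> T_homog n d (\sum_(i <- r) F i).
Proof. move=> h; apply: (big_ind (T_homog n d)) => //; [exact: TH_0|exact: TH_add]. Qed.

Lemma TH_C (c : K) : T_homog n 0 (c%:P%:P : T).
Proof.
move=> a b; rewrite !coefC; case: b => [|b] /=; last by rewrite coef0 eqxx.
rewrite coefC; case: a => [|a] /=; last by rewrite eqxx.
move=> _; apply/dvdz_mod0P; exact: dvdz0.
Qed.

Lemma TH_X : T_homog n 1 ('X%:P : T).
Proof.
move=> a b; rewrite coefC; case: b => [|b] /=; last by rewrite coef0 eqxx.
rewrite coefX; case: a => [|[|a]] /=; rewrite ?eqxx //.
move=> _; apply/dvdz_mod0P; exact: dvdz0.
Qed.

Lemma TH_Y : T_homog n (-1) ('X : T).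
Proof.
move=> a b; rewrite coefX; case: b => [|[|b]] //=; rewrite ?coef0 ?eqxx //.
rewrite coefC; case: a => [|a] /=; last by rewrite eqxx.
move=> _; apply/dvdz_mod0P; exact: dvdz0.
Qed.

Lemma TH_cong (d d' : int) (p : T) : (n%:Z %| d - d')%Z -> T_homog n d p -> T_homog n d' p.
Proof.
move=> hd hp a b h; apply/dvdz_mod0P.
have -> : a%:Z - b%:Z - d' = (a%:Z - b%:Z - d) + (d - d') by ring.
by rewrite rpredD //; apply/dvdz_mod0P; apply: hp.
Qed.

Lemma TH_1 : T_homog n 0 (1 : T).
Proof. exact: TH_C 1. Qed.

Lemma TH_Xn k : T_homog n k%:Z (('X%:P : T) ^+ k).
Proof.
elim: k => [|k IH]; first by rewrite expr0; exact: TH_1.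
rewrite exprSr; have -> : k.+1%:Z = k%:Z + 1 by lia.
exact: TH_mul IH TH_X.
Qed.

Lemma TH_XY k : T_homog n 0 (('X%:P * 'X : T) ^+ k).
Proof.
elim: k => [|k IH]; first by rewrite expr0; exact: TH_1.
rewrite exprSr; have -> : (0 : int) = 0 + (1 + -1) by [].
by apply: TH_mul IH _; apply: TH_mul TH_X TH_Y.
Qed.

Lemma TH_mapCC (q : {poly K}) : T_homog n 0 ((mapCC q).[('X%:P) * 'X]).
Proof.
rewrite horner_coef; apply: TH_sum => i.
have := TH_mul (TH_C (c:=q`_i)) (TH_XY (k:=i)); rewrite addr0 /mapCC coef_map /=; apply.

Qed.

End TH.


Section Main.
Variable K : fieldType.
Variable n : nat.
Hypothesis hn : (3 <= n)%N.

Local Notation T := {poly {poly K}}.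
Local Notation SS := (S K n).
Local Notation F := {fraction {poly K}}.

Definition extract (w : nat) (f : {poly K}) : {poly K} :=
  \poly_(k < size f) f`_(w + k * n).

Lemma extractK (w : nat) (r : {poly K}) : extract w ('X^w * (r \Po 'X^n)) = r.
Proof.
have n0 : (0 < n)%N by lia.
set g := _ * _.
have E : forall k, g`_(w + k * n) = r`_k.
  move=> k; rewrite /g coefXnM ltnNge leq_addr /= addKn coef_comp_poly_Xn //.
  by rewrite dvdn_mull ?dvdnn // mulnK.
apply/polyP => k; rewrite coef_poly; case: ifP => hk; first exact: E.
rewrite -E nth_default //.
have : (k <= k * n)%N by rewrite leq_pmulr.
move/negbT: hk; rewrite -leqNgt => h1 h2.
by apply: leq_trans h1 (leq_trans h2 (leq_addl _ _)).
Qed.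

Lemma psi_uD (i j : 'I_n) : psi (uD K n (Dd n i j)) = 'X^(ww n i j).
Proof.
rewrite /uD /ww; case: ifP => _; first exact: psiYb.
by rewrite psiXn psiXb -exprM.
Qed.

Lemma psi_key (i j : 'I_n) (r : {poly K}) :
  psi (xS n r * uD K n (Dd n i j)) = 'X^(ww n i j) * (r \Po 'X^n).
Proof. by rewrite psiM psi_xS // psi_uD mulrC. Qed.

Lemma homog_lift (i j : 'I_n) (q : {poly K}) :
  S_homog (j%:Z - i%:Z) (xS n q * uD K n (Dd n i j)).
Proof.
exists ((mapCC q).[('X%:P) * 'X] *
   (if Dd n i j == n.-1 then 'X else ('X%:P : T) ^+ Dd n i j)); last first.
  by rewrite toSM -xS_E /uD; case: ifP => _ //; rewrite toSX.
rewrite -[_ - _]add0r; apply: (TH_mul hn); first exact: TH_mapCC.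
have hi := ltn_ord i; have hj := ltn_ord j.
case: ifP => hD.
  apply: (TH_cong _ (TH_Y n)); apply/dvdzP; exists ((j < i)%N%:Z - 1).
  move: hD; rewrite /Dd; case: ifP => ? /eqP ?; lia.
apply: (TH_cong (d := (Dd n i j)%:Z)); last exact: TH_Xn.
apply/dvdzP; exists ((j < i)%N%:Z).
rewrite /Dd; case: ifP => ?; lia.
Qed.

Lemma Sbr_fun (A : 'M[SS]_n) : Sbr A -> exists rA : 'I_n -> 'I_n -> {poly K},
  forall i j, A i j = xS n (rA i j) * uD K n (Dd n i j).
Proof.
move=> hA.
have H : forall i j : 'I_n, exists r, A i j == xS n r * uD K n (Dd n i j).
  by move=> i j; have [r hr] := homog_struct hn (hA i j); exists r; apply/eqP.
by exists (fun i j => xchoose (H i j)) => i j; apply/eqP; exact: (xchooseP (H i j)).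
Qed.

Definition xF : F := ('X : {poly K})%:F.

Lemma xF_neq0 : xF != 0.
Proof. by rewrite /xF tofrac_eq0 polyX_eq0. Qed.

Definition phi (A : 'M[SS]_n) : 'M[F]_n :=
  \matrix_(i, j) (xF ^ (cexp i j) * (extract (ww n i j) (psi (A i j)))%:F).

Lemma phi_entry (A : 'M[SS]_n) (i j : 'I_n) (r : {poly K}) :
  A i j = xS n r * uD K n (Dd n i j) -> phi A i j = xF ^ (cexp i j) * r%:F.
Proof. by move=> e; rewrite /phi mxE e psi_key extractK. Qed.

End Main.

Unset Implicit Arguments. Set Strict Implicit.


Lemma Dd_ii (n : nat) (i : nat) : Dd n i i = 0%N.
Proof. by rewrite /Dd leqnn subnn. Qed.

Lemma uD0 (K : fieldType) (n : nat) : (3 <= n)%N -> uD K n 0 = 1.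
Proof. by move=> hn; rewrite /uD; case: ifP => h; [move/eqP: h; lia|rewrite expr0]. Qed.

Lemma cexp_ii (n : nat) (i : 'I_n) : (3 <= n)%N -> cexp i i = 0.
Proof.
move=> hn; rewrite /cexp leqnn; case: ifP => // /andP [/eqP h1 /eqP h2]; lia.
Qed.

Lemma psi_prod (K : fieldType) (n : nat) (hn : (3 <= n)%N) (i j k : 'I_n) (r1 r2 : {poly K}) :
  psi (xS n r1 * uD K n (Dd n i j) * (xS n r2 * uD K n (Dd n j k))) =
  'X^(ww n i k) * (('X^(kap i j k) * r1 * r2) \Po 'X^n).
Proof.
rewrite psiM !psi_key // !comp_polyM comp_Xn_poly.
have [hw _] := A3 hn i j k.
transitivity ('X^(ww n i j + ww n j k) * ((r1 \Po 'X^n) * (r2 \Po 'X^n))).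
  by rewrite exprD; ring.
by rewrite hw exprD mulnC exprM; ring.
Qed.

Theorem proposition3p24 (K : fieldType) (n : nat) (hn : (3 <= n)%N) :
  exists phi : 'M[S K n]_n -> 'M[{fraction {poly K}}]_n,
    (forall A, Sbr A -> Lam (phi A)) /\
    (forall A B, Sbr A -> Sbr B -> phi A = phi B -> A = B) /\
    (forall B, Lam B -> exists2 A, Sbr A & phi A = B) /\
    (forall A B, Sbr A -> Sbr B -> phi (A + B) = phi A + phi B) /\
    (forall A B, Sbr A -> Sbr B -> phi (A *m B) = phi A *m phi B) /\
    phi 1%:M = 1%:M /\
    (forall (p : {poly K}) A, Sbr A -> phi (xS n p *: A) = (p%:F) *: phi A).
Proof.
exists (@phi K n); split.
  move=> A hA i j; have [rA hr] := Sbr_fun hn hA.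
  by exists (rA i j); rewrite (phi_entry hn (hr i j)).
split.
  move=> A B hA hB e; have [rA hrA] := Sbr_fun hn hA; have [rB hrB] := Sbr_fun hn hB.
  apply/matrixP => i j; have := congr1 (fun M : 'M[{fraction {poly K}}]_n => M i j) e => /=.
  rewrite (phi_entry hn (hrA i j)) (phi_entry hn (hrB i j)).
  move/(mulfI (expfz_neq0 _ (xF_neq0 K))) => /eqP; rewrite tofrac_eq => /eqP h.
  by rewrite hrA hrB h.
split.
  move=> B hB.
  have H : forall i j : 'I_n, exists q, B i j == xF K ^ (cexp i j) * q%:F.
    by move=> i j; have [q hq] := hB i j; exists q; apply/eqP.
  exists (\matrix_(i, j) (xS n (xchoose (H i j)) * uD K n (Dd n i j))).
    by move=> i j; rewrite mxE; apply: homog_lift.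
  apply/matrixP => i j; rewrite (phi_entry hn (r := xchoose (H i j))) ?mxE //.
  by apply/esym/eqP; exact: (xchooseP (H i j)).
split.
  move=> A B hA hB; have [rA hrA] := Sbr_fun hn hA; have [rB hrB] := Sbr_fun hn hB.
  apply/matrixP => i j; rewrite [RHS]mxE (phi_entry hn (hrA i j)) (phi_entry hn (hrB i j)).
  rewrite (phi_entry hn (r := rA i j + rB i j)) ?rmorphD ?mulrDr //.
  by rewrite mxE hrA hrB xSD mulrDl.
split.
  move=> A B hA hB; have [rA hrA] := Sbr_fun hn hA; have [rB hrB] := Sbr_fun hn hB.
  apply/matrixP => i k; rewrite [RHS]mxE /phi mxE.
  have E : psi ((A *m B) i k) =
     'X^(ww n i k) * ((\sum_j 'X^(kap i j k) * rA i j * rB j k) \Po 'X^n).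
    rewrite mxE psi_sum raddf_sum mulr_sumr; apply: eq_bigr => j _.
    by rewrite hrA hrB psi_prod.
  rewrite E extractK // rmorph_sum mulr_sumr; apply: eq_bigr => j _.
  rewrite !mxE hrA hrB !psi_key // !extractK // !rmorphM /= rmorphXn /=.
  have [_ hc] := A3 hn i j k.
  have e2 : xF K ^ cexp i j * xF K ^ cexp j k = xF K ^ cexp i k * xF K ^+ kap i j k.
    by rewrite -expfzDr ?xF_neq0 // hc expfzDr ?xF_neq0 // -exprnP.
  rewrite -/(xF K).
  transitivity (xF K ^ cexp i k * xF K ^+ kap i j k * ((rA i j)%:F * (rB j k)%:F)).
    by ring.
  by rewrite -e2; ring.
split.
  apply/matrixP => i j; rewrite [RHS]mxE.
  have [<-|nij] := eqVneq i j.
    rewrite (phi_entry hn (r := 1)); last by rewrite mxE eqxx xS1 mul1r Dd_ii uD0.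
    by rewrite cexp_ii // expr0z rmorph1 mulr1.
  rewrite (phi_entry hn (r := 0)); last by rewrite mxE (negbTE nij) xS0 mul0r.
  by rewrite rmorph0 mulr0.
move=> p A hA; have [rA hrA] := Sbr_fun hn hA.
apply/matrixP => i j; rewrite [RHS]mxE (phi_entry hn (hrA i j)).
rewrite (phi_entry hn (r := p * rA i j)) ?rmorphM /=; first by ring.
by rewrite mxE hrA xSM mulrA.
Qed.
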